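(* Let $\varphi$ be a morphism of class $P_{ret}$ defined on $\{0,1\}^*$. Then $\varphi$ is conjugate to a standard special $P$-morphism.
   Context: For a finite word $w$, $\overline w$ denotes its reversal; $w$ is a palindrome if $w=\overline w$. A morphism $\varphi:\mathcal B^*\to\mathcal A^*$ is of class $P_{ret}$ if there exists a palindrome $p\in\mathcal A^*$ such that: (a) $\varphi(b)p$ is a palindrome for every $b\in\mathcal B$; (b) for every $b\in\mathcal B$, $\varphi(b)p$ contains exactly two occurrences of $p$, one as a prefix and one as a suffix; (c) $\varphi(b)\ne\varphi(c)$ for distinct $b,c\in\mathcal B$. A morphism $\sigma$ is conjugate to $\varphi$ (same domain alphabet) if there is a word $w$ such that either for every letter $a$, $\varphi(a)$ has prefix $w$ and $\sigma(a)=w^{-1}\varphi(a)w$, or for every letter $a$, $\varphi(a)$ has suffix $w$ and $\sigma(a)=w\varphi(a)w^{-1}$. A morphism $\sigma$ is a standard $P$-morphism if there is a palindrome $r$ (possibly empty) such that for every letter $x$, $\sigma(x)=rq_x$ where each $q_x$ is a palindrome; if $r$ is non-empty, some $q_x$ may be empty or of the form $q_x=\pi_x^{-1}$ with $\pi_x$ a proper palindromic suffix of $r$ (meaning $\sigma(x)$ is $r$ with the suffix $\pi_x$ removed). It is special if (1) the words $\sigma(x)=rq_x$ end with pairwise different letters, and (2) whenever $\sigma(x)r=rq_xr$ (for a letter $x$) occurs in some $\sigma(y_1y_2\cdots y_n)r$, this occurrence is $\sigma(y_m)r$ for some $1\le m\le n$ (i.e., it starts at position $|\sigma(y_1\cdots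 y_{m-1})|$). *)

(* Defs.v *)
From mathcomp Require Import all_boot.
Set Implicit Arguments. Unset Strict Implicit. Unset Printing Implicit Defensive.

(* Words over an alphabet A are [seq A]; a morphism bool^* -> A^* is given by
   the images of the two letters, [phi : bool -> seq A]. *)
Section Words.
Variable A : eqType.

Definition palindrome (w : seq A) : bool := rev w == w.

Definition morph_word (phi : bool -> seq A) (ys : seq bool) : seq A :=
  flatten (map phi ys).

Definition occurs_at (p w : seq A) (i : nat) : bool :=
  (i + size p <= size w) && (take (size p) (drop i w) == p).

Definition num_occ (p w : seq A) : nat :=
  count (occurs_at p w) (iota 0 (size w).+1).

Definition P_ret (phi : bool -> seq A) : Prop :=
  exists p : seq A, palindrome p /\
    (forall b, palindrome (phi b ++ p)) /\
    (forall b, [/\ num_occ p (phi b ++ p) = 2,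
                   occurs_at p (phi b ++ p) 0 &
                   occurs_at p (phi b ++ p) (size (phi b))]) /\
    phi false <> phi true.

Definition conjugate (phi sigma : bool -> seq A) : Prop :=
  exists w : seq A,
    (forall a, prefix w (phi a) /\ sigma a = drop (size w) (phi a) ++ w) \/
    (forall a, suffix w (phi a) /\
               sigma a = w ++ take (size (phi a) - size w) (phi a)).

Definition standard_P_wrt (r : seq A) (sigma : bool -> seq A) : Prop :=
  palindrome r /\
  forall x,
    (exists q, palindrome q /\ sigma x = r ++ q) \/
    (r != [::] /\ exists pi, [/\ palindrome pi, suffix pi r, size pi < size r &
                                 sigma x = take (size r - size pi) r]).

Definition special_wrt (r : seq A) (sigma : bool -> seq A) : Prop :=
  (forall x, sigma x != [::]) /\
  (forall x y, x != y -> forall d : A, last d (sigma x) != last d (sigma y)) /\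
  (forall (x : bool) (ys : seq bool) (i : nat),
     occurs_at (sigma x ++ r) (morph_word sigma ys ++ r) i ->
     exists2 m, m < size ys &
       i = size (morph_word sigma (take m ys)) /\
       sigma x = sigma (nth false ys m)).

Definition standard_special_P (sigma : bool -> seq A) : Prop :=
  exists r : seq A, standard_P_wrt r sigma /\ special_wrt r sigma.

End Words.

(* Main.v *)
Require Import Defs.
From mathcomp Require Import all_boot.
From mathcomp Require Import zify.
Set Implicit Arguments. Unset Strict Implicit. Unset Printing Implicit Defensive.

Lemma catlI (T : Type) (u a b : seq T) : u ++ a = u ++ b -> a = b.
Proof. by elim: u => //= x u IH [] /IH. Qed.

Lemma catrI (T : Type) (u a b : seq T) : a ++ u = b ++ u -> a = b.
Proof.
move=> h; have hs : size a = size b by move: (congr1 size h); rewrite !size_cat; lia.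
by move: (congr1 (take (size a)) h); rewrite take_size_cat // take_size_cat.
Qed.

Lemma tdt (T : Type) (l : seq T) n j m : j + m <= n ->
  take m (drop j (take n l)) = take m (drop j l).
Proof. by move=> h; rewrite !take_drop take_takel //; lia. Qed.

Lemma occP (A : eqType) (q w : seq A) i :
  occurs_at q w i -> take (size q) (drop i w) = q /\ i + size q <= size w.
Proof. by case/andP=> h /eqP. Qed.

Lemma occ_sup (A : eqType) (q q' w : seq A) i j :
  occurs_at q w i -> occurs_at q' q j -> occurs_at q' w (i + j).
Proof.
move=> /occP [h1 h2] /occP [h3 h4]; apply/andP; split; first lia.
apply/eqP; rewrite -[in RHS]h3 -[in RHS]h1 tdt // drop_drop; congr (take _ (drop _ _)); lia.
Qed.

Lemma occ_sub (A : eqType) (q q' w : seq A) i k :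
  occurs_at q w i -> occurs_at q' w k -> i <= k -> k + size q' <= i + size q ->
  occurs_at q' q (k - i).
Proof.
move=> /occP [h1 h2] /occP [h3 h4] hik hk; apply/andP; split; first lia.
apply/eqP; rewrite -h1 tdt; last by rewrite -(leq_add2l i) addnA subnKC.
by rewrite drop_drop -[RHS]h3; congr (take _ (drop _ _)); lia.
Qed.

Lemma occ_pre (A : eqType) (a b : seq A) : occurs_at a (a ++ b) 0.
Proof. by apply/andP; rewrite drop0 take_size_cat // size_cat; split; [lia|]. Qed.

Lemma occ_suf (A : eqType) (a b : seq A) : occurs_at b (a ++ b) (size a).
Proof.
apply/andP; rewrite drop_size_cat // take_size size_cat; split; [lia|done].
Qed.

Lemma occ_cat (A : eqType) (p u v : seq A) j :
  occurs_at p (u ++ v) (size u + j) = occurs_at p v j.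
Proof.
rewrite /occurs_at size_cat (addnC (size u) j) -drop_drop drop_size_cat //.
by congr andb; apply/idP/idP; lia.
Qed.

Lemma occ_catl (A : eqType) (p u a b : seq A) :
  occurs_at (a ++ b) u 0 -> occurs_at a u 0.
Proof. by move=> h; have := occ_sup h (occ_pre a b). Qed.

Lemma occ_iota (A : eqType) (p w : seq A) k :
  occurs_at p w k -> k \in iota 0 (size w).+1.
Proof. by case/occP=> _ h; rewrite mem_iota; lia. Qed.

Lemma occ_only (A : eqType) (p x : seq A) :
  num_occ p (x ++ p) = 2 -> occurs_at p (x ++ p) 0 ->
  occurs_at p (x ++ p) (size x) ->
  x != [::] /\ forall j, occurs_at p (x ++ p) j -> j = 0 \/ j = size x.
Proof.
rewrite /num_occ => hc h0 hx.
have xne : x != [::].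
  apply/eqP=> ex; move: hc; rewrite ex cat0s -size_filter => hc.
  suff : size [seq k <- iota 0 (size p).+1 | occurs_at p p k] <= size [:: 0] by rewrite hc.
  apply: uniq_leq_size; first by apply: filter_uniq; apply: iota_uniq.
  by move=> k; rewrite mem_filter => /andP [/occP [_ hk] _]; rewrite inE; apply/eqP; lia.
split=> // j hj.
case: (eqVneq j 0) => [->|j0]; first by left.
case: (eqVneq j (size x)) => [->|jx]; first by right.
have sx : size x != 0 by rewrite size_eq0.
suff : 3 <= count (occurs_at p (x ++ p)) (iota 0 (size (x ++ p)).+1) by rewrite hc.
rewrite -size_filter.
have -> : 3 = size [:: 0; size x; j] by [].
apply: uniq_leq_size.
  by rewrite /= !inE negb_or eq_sym sx eq_sym j0 eq_sym jx.
move=> k; rewrite !inE => /or3P [] /eqP ->; rewrite mem_filter.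
- by rewrite h0 (occ_iota h0).
- by rewrite hx (occ_iota hx).
- by rewrite hj (occ_iota hj).
Qed.

Lemma mw_cons (A : eqType) (phi : bool -> seq A) y ys :
  morph_word phi (y :: ys) = phi y ++ morph_word phi ys.
Proof. by []. Qed.

Lemma mw_pre (A : eqType) (phi : bool -> seq A) p :
  (forall b, occurs_at p (phi b ++ p) 0) ->
  forall ys, exists X, morph_word phi ys ++ p = p ++ X.
Proof.
move=> H0; elim=> [|y ys [X hX]]; first by exists [::]; rewrite cats0.
have /occP [h _] := H0 y; rewrite drop0 in h.
exists (drop (size p) (phi y ++ p) ++ X).
by rewrite mw_cons -catA hX catA -{1}(cat_take_drop (size p) (phi y ++ p)) h catA.
Qed.

Lemma main_sync (A : eqType) (phi : bool -> seq A) p :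
  (forall b, phi b != [::]) ->
  (forall b, occurs_at p (phi b ++ p) 0) ->
  (forall b j, occurs_at p (phi b ++ p) j -> j = 0 \/ j = size (phi b)) ->
  forall x ys i, occurs_at (phi x ++ p) (morph_word phi ys ++ p) i ->
  exists2 m, m < size ys &
     i = size (morph_word phi (take m ys)) /\ phi x = phi (nth false ys m).
Proof.
move=> Hne H0 Hocc x; elim=> [|y ys IH] i.
  move=> /occP [_]; rewrite /= size_cat; have := Hne x.
  by rewrite -size_eq0; lia.
rewrite mw_cons -catA.
case: (leqP (size (phi y)) i) => hi.
  rewrite -(subnKC hi) occ_cat => /IH [m hm [e1 e2]].
  exists m.+1 => //; split => //.
  by rewrite /= mw_cons size_cat -e1.
move=> hocc.
have [X hX] := mw_pre H0 ys.
move: hocc; rewrite hX catA => hocc.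
have hp := occ_sup hocc (H0 x); rewrite addn0 in hp.
have hps := occ_sup hocc (occ_suf (phi x) p).
have := occ_sub (occ_pre (phi y ++ p) X) hp (leq0n _).
rewrite subn0 size_cat => /(_ ltac:(lia)) /Hocc [i0|]; last by lia.
subst i.
have /occP [hx _] := occ_sup hocc (occ_pre (phi x) p).
have hy := occ_pre (phi y) (p ++ X); rewrite catA in hy.
have /occP [hy' _] := hy.
have := Hne x; have := Hne y; rewrite -!size_eq0 => nex ney.
case: (ltngtP (size (phi x)) (size (phi y))) => hxy.
- have := occ_sub (occ_pre (phi y ++ p) X) hps (leq0n _).
  rewrite subn0 !size_cat add0n => /(_ ltac:(lia)) /Hocc; lia.
- have hq : occurs_at p ((phi y ++ p) ++ X) (size (phi y)).
    by rewrite -catA -[size (phi y)]addn0 occ_cat occ_pre.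
  have := occ_sub hocc hq (leq0n _).
  rewrite subn0 !size_cat add0n => /(_ ltac:(lia)) /Hocc; lia.
- exists 0 => //; split => //.
  by rewrite /= -[LHS]hx -[RHS]hy' hxy.
Qed.

Lemma pal_std (A : eqType) (r X : seq A) :
  palindrome r -> palindrome (X ++ r) -> X != [::] ->
  (exists q, palindrome q /\ X = r ++ q) \/
  (r != [::] /\ exists pi, [/\ palindrome pi, suffix pi r, size pi < size r &
                               X = take (size r - size pi) r]).
Proof.
rewrite /palindrome => /eqP hr /eqP hXr hX.
have e : X ++ r = r ++ rev X by rewrite -{1}hXr rev_cat hr.
have sX : 0 < size X by rewrite lt0n size_eq0.
case: (leqP (size r) (size X)) => hs.
  left; exists (drop (size r) X).
  have ht : take (size r) X = r.
    by move: (congr1 (take (size r)) e); rewrite takel_cat // take_size_cat.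
  have eX : X = r ++ drop (size r) X by rewrite -{1}(cat_take_drop (size r) X) ht.
  split => //; apply/eqP.
  move: e; set q := drop (size r) X => e.
  have e2 : r ++ (q ++ r) = r ++ (rev q ++ r).
    by rewrite catA -eX e {1}eX rev_cat hr.
  by move/catlI/catrI: e2 => <-.
right; split.
  by rewrite -size_eq0; apply/eqP; lia.
have ht : take (size X) r = X.
  by move: (congr1 (take (size X)) e); rewrite take_size_cat // takel_cat //; lia.
set pi := drop (size X) r.
have er : r = X ++ pi by rewrite -{1}(cat_take_drop (size X) r) ht.
exists pi; split.
- move: e hr; rewrite er rev_cat -catA => /catlI ->.
  by move=> /catrI ->; rewrite eqxx.
- by rewrite er suffix_suffix.
- by rewrite er size_cat; lia.
- by rewrite er size_cat addnK take_size_cat.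
Qed.

Lemma cpre (A : eqType) (l1 l2 : seq A) :
  exists c t1 t2, [/\ l1 = c ++ t1, l2 = c ++ t2 &
    t1 = [::] \/ t2 = [::] \/
    exists x1 r1 x2 r2, [/\ t1 = x1 :: r1, t2 = x2 :: r2 & x1 != x2]].
Proof.
elim: l1 l2 => [|a l1 IH] l2; first by exists [::], [::], l2; split => //; left.
case: l2 => [|b l2]; first by exists [::], (a :: l1), [::]; split => //; right; left.
case: (eqVneq a b) => [<-|ab].
  have [c [t1 [t2 [e1 e2 h]]]] := IH l2.
  by exists (a :: c), t1, t2; rewrite e1 e2.
by exists [::], (a :: l1), (b :: l2); split => //; right; right; exists a, l1, b, l2.
Qed.

Theorem lemma6p4 (A : eqType) (phi : bool -> seq A) :
  P_ret phi ->
  exists sigma : bool -> seq A, conjugate phi sigma /\ standard_special_P sigma.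
Proof.
move=> [p [hp [hpal [hocc hneq]]]].
have Hne : forall b, phi b != [::].
  by move=> b; have [h1 h2 h3] := hocc b; case: (occ_only h1 h2 h3).
have Hocc : forall b j, occurs_at p (phi b ++ p) j -> j = 0 \/ j = size (phi b).
  by move=> b; have [h1 h2 h3] := hocc b; case: (occ_only h1 h2 h3).
have H0 : forall b, occurs_at p (phi b ++ p) 0 by move=> b; case: (hocc b).
have [c [t1 [t2 [e1 e2 hct]]]] := cpre (rev (phi false)) (rev (phi true)).
set s := rev c.
pose u (b : bool) := rev (if b then t2 else t1).
have ephi : forall b, phi b = u b ++ s.
  by case; rewrite /u /s -rev_cat -?e1 -?e2 revK.
have hu : forall b, u b != [::].
  move=> b; apply/eqP => ub.
  have eb : phi b = s by rewrite ephi ub.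
  have enb : phi (~~ b) = u (~~ b) ++ phi b by rewrite eb ephi.
  have := H0 b; rewrite -(occ_cat _ (u (~~ b))) catA -enb addn0 => /Hocc.
  rewrite enb size_cat; have := Hne b; rewrite -size_eq0 => nb [hz|]; last lia.
  have : u (~~ b) = [::] by apply/eqP; rewrite -size_eq0 hz.
  move=> z; move: enb; rewrite z /= => enb.
  by apply: hneq; case: b enb {eb ub z hz nb} => ->.
have [x1 [r1 [x2 [r2 [et1 et2 x12]]]]] :
    exists x1 r1 x2 r2, [/\ t1 = x1 :: r1, t2 = x2 :: r2 & x1 != x2].
  case: hct => [t10|[t20|//]].
    by have := hu false; rewrite /u t10.
  by have := hu true; rewrite /u t20.
have hlast : forall b d, last d (u b) = if b then x2 else x1.
  by case => d; rewrite /u ?et1 ?et2 rev_cons last_rcons.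
pose sigma (a : bool) := s ++ take (size (phi a) - size s) (phi a).
have es : forall a, sigma a = s ++ u a.
  by move=> a; rewrite /sigma ephi size_cat addnK take_size_cat.
have mws : forall ys, morph_word sigma ys ++ s = s ++ morph_word phi ys.
  elim=> [|y ys IH]; first by rewrite /= cats0.
  by rewrite !mw_cons -catA IH es ephi -!catA.
have sz : forall ys, size (morph_word sigma ys) = size (morph_word phi ys).
  by move=> ys; move: (congr1 size (mws ys)); rewrite !size_cat; lia.
have szs : forall a, size (sigma a) = size (phi a).
  by move=> a; rewrite es ephi !size_cat; lia.
have hps : palindrome (s ++ p ++ rev s).
  move: hp; rewrite /palindrome => /eqP hp.
  by rewrite !rev_cat revK hp catA.
exists sigma; split.
  exists s; right => a; split => //.
  by rewrite ephi suffix_suffix.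
exists (s ++ p ++ rev s); split.
  split => // x; apply: pal_std => //; last by rewrite es -size_eq0 size_cat; have := hu x; rewrite -size_eq0; lia.
  move: (hpal x); rewrite /palindrome => /eqP hx.
  have -> : sigma x ++ s ++ p ++ rev s = s ++ (phi x ++ p) ++ rev s.
    by rewrite es ephi -!catA.
  by rewrite /palindrome rev_cat rev_cat revK hx; apply/eqP; rewrite -!catA.
split; first by move=> x; rewrite es -size_eq0 size_cat; have := hu x; rewrite -size_eq0; lia.
split.
  move=> x y xy d; rewrite !es !last_cat !hlast.
  by move: xy; case: x; case: y => //= _; rewrite // eq_sym.
move=> x ys i hoc.
have eW : morph_word sigma ys ++ s ++ p ++ rev s =
          s ++ ((morph_word phi ys ++ p) ++ rev s).
  by rewrite catA mws -!catA.
have eX : sigma x ++ s ++ p ++ rev s = s ++ ((phi x ++ p) ++ rev s).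
  by rewrite es ephi -!catA.
have [_ hle] := occP hoc.
move: hoc; rewrite eW eX => hoc.
have h1 := occ_sup (occ_sup hoc (occ_suf s _)) (occ_pre (phi x ++ p) (rev s)).
rewrite addn0 addnC occ_cat in h1.
have h2 := occ_sub (occ_pre (morph_word phi ys ++ p) (rev s)) h1 (leq0n _).
move: hle; rewrite size_cat szs !size_cat sz => hle.
have := h2 ltac:(rewrite !size_cat; lia); rewrite subn0.
move=> /(main_sync Hne H0 Hocc) [m hm [ei ex]].
exists m => //; split; first by rewrite sz.
by rewrite /sigma ex.
Qed.
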